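(* Let $\mathcal C$ be a real polynomial curve. If there exist a point $P_0\in\mathbb R^2$ and an angle $\theta\in(0,2\pi)$ such that the rotation of center $P_0$ and angle $\theta$ maps $\mathcal C$ onto itself, then $\theta=\pi$. That is, the only form of rotation symmetry a real polynomial curve can have is central symmetry.
   Context: A real polynomial curve is the plane curve $\mathcal C=\{(x(t),y(t)) : t\in\mathbb R\}\subset\mathbb R^2$ given by a parametrization $\varphi(t)=(x(t),y(t))$ with $x(t),y(t)\in\mathbb R[t]$ not both constant. $\mathcal C$ has rotation symmetry if some rotation of center $P_0$ and angle $\theta\in(0,2\pi)$ maps $\mathcal C$ onto itself; when $\theta=\pi$ this is called central symmetry (symmetry with respect to the point $P_0$, the center of symmetry). *)

(* Defs.v *)
From Stdlib Require Import Reals List.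
Open Scope R_scope.

(* A real polynomial, given by its list of coefficients [a0; a1; ...; an]
   (lowest degree first); evaluation by Horner's scheme. *)
Definition peval (p : list R) (t : R) : R :=
  fold_right (fun a acc => a + t * acc) 0 p.

(* The polynomial p is constant (as a function of t, equivalently as a
   polynomial since R is infinite). *)
Definition pconst (p : list R) : Prop :=
  forall t s : R, peval p t = peval p s.

Definition param (px py : list R) (t : R) : R * R :=
  (peval px t, peval py t).

Definition rotation (x0 y0 theta : R) (P : R * R) : R * R :=
  let (a, b) := P in
  (x0 + cos theta * (a - x0) - sin theta * (b - y0),
   y0 + sin theta * (a - x0) + cos theta * (b - y0)).

Definition on_curve (px py : list R) (P : R * R) : Prop :=
  exists t : R, param px py t = P.

Definition maps_curve_onto_itself (px py : list R) (f : R * R -> R * R) : Prop :=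
  (forall P, on_curve px py P -> on_curve px py (f P)) /\
  (forall Q, on_curve px py Q -> exists P, on_curve px py P /\ f P = Q).

(* Main.v *)
Require Import Defs.
From Stdlib Require Import Reals List Lra Lia Psatz Classical.
Open Scope R_scope.

Fixpoint Ssum (p : list R) : R := match p with nil => 0 | a :: q => Rabs a + Ssum q end.

Lemma Ssum_ge0 p : 0 <= Ssum p.
Proof. induction p; simpl; [lra| pose proof (Rabs_pos a); lra]. Qed.

Definition w (t : R) := Rmax 1 (Rabs t).

Lemma w_ge1 t : 1 <= w t. Proof. unfold w; apply Rmax_l. Qed.
Lemma w_abs t : Rabs t <= w t. Proof. unfold w; apply Rmax_r. Qed.

Lemma pow_ge1 x k : 1 <= x -> 1 <= x ^ k.
Proof. intros; induction k; simpl; nra. Qed.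

Lemma poly_bound p t k : (length p <= S k)%nat -> Rabs (peval p t) <= Ssum p * w t ^ k.
Proof.
  revert k; induction p as [|a q IH]; intros k Hl; simpl.
  - rewrite Rabs_R0. pose proof (pow_ge1 (w t) k (w_ge1 t)). lra.
  - simpl in Hl. destruct k as [|k].
    + destruct q; [|simpl in Hl; lia]. simpl. rewrite Rmult_0_r, Rplus_0_r. lra.
    + specialize (IH k ltac:(lia)).
      pose proof (Rabs_triang a (t * peval q t)) as H.
      rewrite Rabs_mult in H.
      pose proof (w_abs t). pose proof (w_ge1 t) as H1. pose proof (pow_ge1 (w t) k H1).
      pose proof (Rabs_pos a). pose proof (Rabs_pos t). pose proof (Rabs_pos (peval q t)).
      pose proof (Ssum_ge0 q).
      assert (Rabs t * Rabs (peval q t) <= w t * (Ssum q * w t ^ k)) by (apply Rmult_le_compat; lra).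
      assert (1 <= w t * w t ^ k) by nra.
      assert (Rabs a * 1 <= Rabs a * (w t * w t ^ k)) by (apply Rmult_le_compat_l; lra).
      simpl. nra.
Qed.

Lemma peval_zero p t : (forall k, nth k p 0 = 0) -> peval p t = 0.
Proof. induction p as [|a q IH]; intros H; simpl; [reflexivity|].
  rewrite IH. - specialize (H 0%nat). simpl in H. lra. - intros k; exact (H (S k)). Qed.

Lemma decomp p n t : (forall k, (n < k)%nat -> nth k p 0 = 0) ->
  peval p t = peval (firstn n p) t + nth n p 0 * t ^ n.
Proof.
  revert n; induction p as [|a q IH]; intros n H.
  - destruct n; simpl; ring.
  - destruct n as [|n]; simpl.
    + rewrite (peval_zero q t). ring. intros k. exact (H (S k) ltac:(lia)).
    + rewrite (IH n). ring. intros k Hk. exact (H (S k) ltac:(lia)).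
Qed.

Lemma top_coef (px py : list R) : forall m,
  (forall k, (m < k)%nat -> nth k px 0 = 0 /\ nth k py 0 = 0) ->
  (forall k, (1 <= k)%nat -> nth k px 0 = 0 /\ nth k py 0 = 0) \/
  exists n, (1 <= n)%nat /\ ~(nth n px 0 = 0 /\ nth n py 0 = 0) /\
     (forall k, (n < k)%nat -> nth k px 0 = 0 /\ nth k py 0 = 0).
Proof.
  induction m as [|m IH]; intros H.
  - left. intros k Hk. apply H. lia.
  - destruct (classic (nth (S m) px 0 = 0 /\ nth (S m) py 0 = 0)) as [Hz|Hz].
    + apply IH. intros k Hk. destruct (Nat.eq_dec k (S m)) as [->|]; [exact Hz|]. apply H; lia.
    + right. exists (S m). split; [lia|]. split; assumption.
Qed.

Lemma abs_lb x y : Rabs x - Rabs y <= Rabs (x + y).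
Proof. unfold Rabs; repeat destruct Rcase_abs; lra. Qed.

Lemma abs_lin2 a b u v Sa Sb V : Rabs u <= Sa*V -> Rabs v <= Sb*V -> 0<=Sa -> 0<=Sb -> 0<=V ->
  Rabs (a*u + b*v) <= ((Rabs a + Rabs b)*(Sa+Sb)+1)*V.
Proof.
  intros Hu Hv HSa HSb HV.
  pose proof (Rabs_triang (a*u) (b*v)) as H. rewrite !Rabs_mult in H.
  pose proof (Rabs_pos a). pose proof (Rabs_pos b).
  assert (Rabs a * Rabs u <= Rabs a * (Sa*V)) by (apply Rmult_le_compat_l; lra).
  assert (Rabs b * Rabs v <= Rabs b * (Sb*V)) by (apply Rmult_le_compat_l; lra).
  assert (0 <= (Rabs a * Sb + Rabs b * Sa + 1) * V) by (apply Rmult_le_pos; nra).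
  nra.
Qed.

Lemma core m N D K0 K1 al : 0<N -> 0<D -> 0<al -> 0 <= K0 -> 0 <= K1 -> exists T, 1 <= T /\
  forall W, 1 <= W -> D*W^m < al*(T*T^m) - K0 - 2*D*T^m \/
     N*(W*W^m) - N - D*W^m > K1 + N*(T*T^m) + 2*D*T^m.
Proof.
  intros HN HD Hal HK0 HK1.
  set (G := N + D + K1 + (N+2*D)*(2*D/al)).
  set (H := (G/N)^m).
  assert (HG : 0 < G) by (unfold G; assert (0 < 2*D/al) by (apply Rdiv_lt_0_compat; lra); nra).
  assert (HH : 0 <= H) by (unfold H; apply pow_le; apply Rlt_le, Rdiv_lt_0_compat; lra).
  exists (2*(K0+2*D)/al + 2*D*H/al + 1).
  set (T := 2*(K0+2*D)/al + 2*D*H/al + 1).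
  assert (HT1 : al * T = 2*(K0+2*D) + 2*D*H + al) by (unfold T; field; lra).
  assert (0 <= 2*(K0+2*D)/al) by (apply Rmult_le_pos; [lra| apply Rlt_le, Rinv_0_lt_compat; lra]).
  assert (0 <= 2*D*H/al) by (apply Rmult_le_pos; [nra| apply Rlt_le, Rinv_0_lt_compat; lra]).
  split; [unfold T; lra|].
  intros W HW.
  pose proof (pow_ge1 W m HW) as HV. pose proof (pow_ge1 T m ltac:(unfold T; lra)) as HP.
  set (V := W^m) in *. set (P := T^m) in *.
  destruct (Rlt_le_dec (D*V) (al*(T*P) - K0 - 2*D*P)) as [h|h1]; [left; exact h|].
  destruct (Rlt_le_dec (K1 + N*(T*P) + 2*D*P) (N*(W*V) - N - D*V)) as [h|h2]; [right; lra|].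
  exfalso.
  assert (s1 : al*T*P/2 <= D*V).
  { assert (al*T/2 - 2*D >= K0) by nra.
    assert (0 <= (P-1)*(al*T/2 - 2*D)) by (apply Rmult_le_pos; lra). nra. }
  assert (s1' : T*P <= 2*D*V/al).
  { apply (Rmult_le_reg_l al); [lra|]. field_simplify; [|lra]. nra. }
  assert (HT : 1 <= T) by (unfold T; lra).
  assert (s2 : N*(W*V) <= V*G).
  { unfold G. assert (P <= T*P) by nra.
    assert ((N+2*D)*(T*P) <= (N+2*D)*(2*D*V/al)) by (apply Rmult_le_compat_l; lra).
    assert ((N+2*D)*(2*D*V/al) = V*((N+2*D)*(2*D/al))) by (field; lra).
    nra. }
  assert (s3 : W <= G/N).
  { apply (Rmult_le_reg_l N); [lra|]. field_simplify; [|lra]. nra. }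
  assert (s4 : V <= H) by (unfold V, H; apply pow_incr; lra).
  assert (D*V <= D*H) by (apply Rmult_le_compat_l; lra).
  assert (0 <= (P-1)*(al*T)) by (apply Rmult_le_pos; nra).
  nra.
Qed.
Lemma w_pow x k : w x ^ k <= Rabs x ^ k + 1.
Proof.
  unfold w, Rmax. destruct (Rle_dec 1 (Rabs x)).
  - lra.
  - rewrite pow1. pose proof (pow_le (Rabs x) k (Rabs_pos x)). lra.
Qed.

Lemma sin0_pi theta : 0 < theta < 2 * PI -> sin theta = 0 -> theta = PI.
Proof.
  intros Hth Hs. destruct (sin_eq_0_0 _ Hs) as [k ->].
  pose proof PI_RGT_0.
  assert (0 < IZR k) by nra. assert (IZR k < 2) by nra.
  apply lt_IZR in H0. apply lt_IZR in H1.
  assert (k = 1%Z) by lia. subst. simpl. ring.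
Qed.

Theorem theorem1 (px py : list R) :
  ~ (pconst px /\ pconst py) ->
  forall (x0 y0 theta : R),
    0 < theta < 2 * PI ->
    maps_curve_onto_itself px py (rotation x0 y0 theta) ->
    theta = PI.
Proof.
  intros Hnc x0 y0 theta Hth [Hfwd _].
  assert (Hstart : forall k, (length px + length py < k)%nat -> nth k px 0 = 0 /\ nth k py 0 = 0).
  { intros k Hk; split; apply nth_overflow; lia. }
  destruct (top_coef px py _ Hstart) as [Hall | [n [Hn1 [Hnz Htop]]]].
  { exfalso; apply Hnc; split; intros t s;
     rewrite (decomp _ 0 t), (decomp _ 0 s); simpl; try ring; intros k Hk; apply Hall; lia. }
  destruct n as [|m]; [lia|].
  apply sin0_pi; [exact Hth|].
  destruct (Req_dec (sin theta) 0) as [Hs|Hs]; [exact Hs|exfalso].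
  set (a := nth (S m) px 0) in *. set (b := nth (S m) py 0) in *.
  set (N := a*a+b*b).
  assert (HN : 0 < N).
  { unfold N. destruct (Req_dec a 0) as [Ha|Ha]; [|nra].
    destruct (Req_dec b 0) as [Hb|Hb]; [tauto|nra]. }
  set (c := cos theta) in *. set (s := sin theta) in *.
  pose proof (COS_bound theta) as Hc. pose proof (SIN_bound theta) as Hsb.
  fold c in Hc. fold s in Hsb.
  set (A := fun t => peval (firstn (S m) px) t).
  set (B := fun t => peval (firstn (S m) py) t).
  assert (Hx : forall t, peval px t = A t + a * t ^ (S m)).
  { intros t. apply decomp. intros k Hk; apply Htop; lia. }
  assert (Hy : forall t, peval py t = B t + b * t ^ (S m)).
  { intros t. apply decomp. intros k Hk; apply Htop; lia. }
  set (SA := Ssum (firstn (S m) px)). set (SB := Ssum (firstn (S m) py)).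
  assert (HA : forall t, Rabs (A t) <= SA * w t ^ m).
  { intros t; apply poly_bound, firstn_le_length. }
  assert (HB : forall t, Rabs (B t) <= SB * w t ^ m).
  { intros t; apply poly_bound, firstn_le_length. }
  pose proof (Ssum_ge0 (firstn (S m) px)) as HSA. pose proof (Ssum_ge0 (firstn (S m) py)) as HSB.
  fold SA in HSA. fold SB in HSB.
  set (D := (Rabs a + Rabs b)*(SA+SB)+1).
  assert (HD : 0 < D).
  { unfold D. pose proof (Rabs_pos a). pose proof (Rabs_pos b). nra. }
  set (K0 := a*(y0 - s*x0 - c*y0) - b*(x0 - c*x0 + s*y0)).
  set (K1 := a*(x0 - c*x0 + s*y0) + b*(y0 - s*x0 - c*y0)).
  assert (Hal : 0 < Rabs s * N).
  { apply Rmult_lt_0_compat; [apply Rabs_pos_lt; exact Hs| exact HN]. }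
  destruct (core m N D (Rabs K0) (Rabs K1) (Rabs s * N) HN HD Hal (Rabs_pos _) (Rabs_pos _))
    as [T [HT1 Hcore]].
  destruct (Hfwd (param px py T) (ex_intro _ T eq_refl)) as [sg Hsg].
  unfold param, rotation in Hsg. injection Hsg as Hqx Hqy.
  fold c s in Hqx, Hqy.
  specialize (Hcore (w sg) (w_ge1 sg)).
  assert (HwT : w T = T).
  { unfold w. rewrite Rabs_right by lra. unfold Rmax. destruct (Rle_dec 1 T); lra. }
  pose proof (HA sg) as HAs. pose proof (HB sg) as HBs.
  pose proof (HA T) as HAT. pose proof (HB T) as HBT. rewrite HwT in HAT, HBT.
  pose proof (pow_ge1 _ m (w_ge1 sg)) as HV. pose proof (pow_ge1 _ m HT1) as HP.
  set (V := w sg ^ m) in *. set (P := T ^ m) in *. set (W := w sg) in *.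
  rewrite !Hx, !Hy in Hqx, Hqy.
  assert (Ecr : a * (B sg) - b * (A sg) =
     K0 + s * N * (T * P) + (s * (a * A T + b * B T) + c * (a * B T + (-b) * A T))).
  { assert (a * (B sg + b * sg ^ S m) - b * (A sg + a * sg ^ S m) = a * (B sg) - b * (A sg)) as E by ring.
    rewrite <- E, Hqy, Hqx. unfold K0, N, P. simpl. rewrite ?Hx, ?Hy. simpl. ring. }
  assert (Elin : a * (A sg) + b * (B sg) + N * sg ^ S m =
     K1 + c * N * (T * P) + (c * (a * A T + b * B T) - s * (a * B T + (-b) * A T))).
  { assert (a * (A sg + a * sg ^ S m) + b * (B sg + b * sg ^ S m) = a * (A sg) + b * (B sg) + N * sg ^ S m) as E by (unfold N; ring).
    rewrite <- E, Hqy, Hqx. unfold K1, N, P. simpl. rewrite ?Hx, ?Hy. simpl. ring. }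
  pose proof (abs_lin2 a (-b) (B sg) (A sg) SB SA V HBs HAs HSB HSA ltac:(lra)) as B1.
  pose proof (abs_lin2 a b (A sg) (B sg) SA SB V HAs HBs HSA HSB ltac:(lra)) as B2.
  pose proof (abs_lin2 a b (A T) (B T) SA SB P HAT HBT HSA HSB ltac:(lra)) as B3.
  pose proof (abs_lin2 a (-b) (B T) (A T) SB SA P HBT HAT HSB HSA ltac:(lra)) as B4.
  rewrite Rabs_Ropp in B1, B4.
  replace ((Rabs a + Rabs b) * (SB + SA) + 1) with D in B1, B4 by (unfold D; ring).
  fold D in B2, B3.
  assert (HTP : 0 < T * P) by nra.
  assert (Hsc : Rabs (s * (a * A T + b * B T) + c * (a * B T + (-b) * A T)) <= 2 * D * P).
  { pose proof (Rabs_triang (s * (a * A T + b * B T)) (c * (a * B T + (-b) * A T))).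
    rewrite !Rabs_mult in H.
    assert (Rabs s <= 1) by (apply Rabs_le; lra). assert (Rabs c <= 1) by (apply Rabs_le; lra).
    pose proof (Rabs_pos s). pose proof (Rabs_pos c).
    pose proof (Rabs_pos (a * A T + b * B T)). pose proof (Rabs_pos (a * B T + (-b) * A T)).
    nra. }
  assert (Hsc2 : Rabs (c * (a * A T + b * B T) - s * (a * B T + (-b) * A T)) <= 2 * D * P).
  { unfold Rminus. pose proof (Rabs_triang (c * (a * A T + b * B T)) (- (s * (a * B T + (-b) * A T)))).
    rewrite Rabs_Ropp, !Rabs_mult in H.
    assert (Rabs s <= 1) by (apply Rabs_le; lra). assert (Rabs c <= 1) by (apply Rabs_le; lra).
    pose proof (Rabs_pos s). pose proof (Rabs_pos c).
    pose proof (Rabs_pos (a * A T + b * B T)). pose proof (Rabs_pos (a * B T + (-b) * A T)).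
    nra. }
  destruct Hcore as [C1|C2].
  - assert (E1 : Rabs (s * N * (T * P)) = Rabs s * N * (T * P)).
    { rewrite (Rabs_mult (s*N) (T*P)), (Rabs_right (T*P)) by lra. rewrite Rabs_mult, (Rabs_right N) by lra. ring. }
    pose proof (abs_lb (s * N * (T * P)) (K0 + (s * (a * A T + b * B T) + c * (a * B T + (-b) * A T)))) as L1.
    pose proof (Rabs_triang K0 (s * (a * A T + b * B T) + c * (a * B T + (-b) * A T))) as L2.
    replace (s * N * (T * P) + (K0 + (s * (a * A T + b * B T) + c * (a * B T + (-b) * A T))))
      with (a * B sg - b * A sg) in L1 by (rewrite Ecr; ring).
    replace (a * B sg - b * A sg) with (a * B sg + (-b) * A sg) in L1 by ring.
    lra.
  - assert (E1 : Rabs (N * sg ^ S m) = N * Rabs sg ^ S m).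
    { rewrite Rabs_mult, Rabs_right by lra. rewrite RPow_abs. reflexivity. }
    assert (Eq2 : N * sg ^ S m = K1 + c * N * (T * P) + (c * (a * A T + b * B T) - s * (a * B T + (-b) * A T)) - (a * A sg + b * B sg)) by lra.
    assert (Rabs (c * N * (T * P)) <= N * (T * P)).
    { rewrite (Rabs_mult (c*N) (T*P)), (Rabs_right (T*P)) by lra. rewrite Rabs_mult, (Rabs_right N) by lra.
      assert (Rabs c <= 1) by (apply Rabs_le; lra).
      assert (0 <= (1 - Rabs c) * (N * (T * P))) by (apply Rmult_le_pos; nra). nra. }
    assert (Rabs (N * sg ^ S m) <= Rabs K1 + N * (T*P) + 2*D*P + D*V).
    { rewrite Eq2. unfold Rminus.
      pose proof (Rabs_triang (K1 + c * N * (T * P) + (c * (a * A T + b * B T) + - (s * (a * B T + (-b) * A T)))) (- (a * A sg + b * B sg))).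
      pose proof (Rabs_triang (K1 + c * N * (T * P)) (c * (a * A T + b * B T) + - (s * (a * B T + (-b) * A T)))).
      pose proof (Rabs_triang K1 (c * N * (T * P))).
      rewrite Rabs_Ropp in H0. unfold Rminus in Hsc2. lra. }
    pose proof (w_pow sg (S m)) as Hw. fold W in Hw. simpl in Hw. fold V in Hw.
    assert (N * (W * V) <= N * (Rabs sg * Rabs sg ^ m) + N).
    { simpl in E1. apply Rmult_le_compat_l with (r := N) in Hw; lra. }
    change (Rabs sg ^ S m) with (Rabs sg * Rabs sg ^ m) in E1. lra.
Qed.
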